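(* Let $n\ge 2$, $q=e^{2\pi i/6}$, and in $Q_n$ define $s_i=\frac{-1}{2q}(1+u_i+v_i+u_iv_i)$ for $1\le i\le n-1$. Then the $s_i$ satisfy $s_is_{i+1}s_i=s_{i+1}s_is_{i+1}$ for $1\le i\le n-2$, $s_is_j=s_js_i$ for $|i-j|\ge 2$, and $(s_i-q)(s_i+1)=0$ for all $i$. Moreover $s_1^{-1}=-\frac{q}{2}(1-u_1-v_1-u_1v_1)$ and $s_1^{-1}u_1s_1=u_1v_1$, $s_1^{-1}v_1s_1=u_1$, $s_1^{-1}u_2s_1=u_2v_1$, $s_1^{-1}v_2s_1=-u_1v_1v_2$.
   Context: $Q_n$ is the $\mathbb{C}$-algebra with generators $u_1,v_1,\dots,u_{n-1},v_{n-1}$ and relations: (G1) $u_i^2=v_i^2=-1$; (G2) $[u_i,v_j]=-1$ if $|i-j|\le 1$; (G3) $[u_i,v_j]=1$ if $|i-j|\ge 2$; (G4) $[u_i,u_j]=[v_i,v_j]=1$, where $[a,b]=aba^{-1}b^{-1}$. *)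

(* Defs.v *)
From HB Require Import structures.
From mathcomp Require Import all_boot all_order all_algebra all_field.
Set Implicit Arguments. Unset Strict Implicit. Unset Printing Implicit Defensive.
Import Order.TTheory GRing.Theory Num.Theory.
Local Open Scope ring_scope.

Definition gcomm (A : unitRingType) (a b : A) : A := a * b * a^-1 * b^-1.

(* q = e^{2 pi i / 6} = (1 + i sqrt 3)/2 in the algebraic complex numbers *)
Definition q6 : algC := (1 + 'i * sqrtC 3%:R) / 2%:R.

Definition Qn_rels (n : nat) (A : unitRingType) (u v : nat -> A) : Prop :=
  (forall i, (1 <= i <= n.-1)%N -> u i ^+ 2 = -1 /\ v i ^+ 2 = -1) /\
  (forall i j, (1 <= i <= n.-1)%N -> (1 <= j <= n.-1)%N ->
     (i <= j.+1)%N -> (j <= i.+1)%N -> gcomm (u i) (v j) = -1) /\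
  (forall i j, (1 <= i <= n.-1)%N -> (1 <= j <= n.-1)%N ->
     ((i.+2 <= j)%N || (j.+2 <= i)%N) -> gcomm (u i) (v j) = 1) /\
  (forall i j, (1 <= i <= n.-1)%N -> (1 <= j <= n.-1)%N ->
     gcomm (u i) (u j) = 1 /\ gcomm (v i) (v j) = 1).

Definition s_gen (A : unitAlgType algC) (u v : nat -> A) (i : nat) : A :=
  (- (2%:R * q6)^-1) *: (1 + u i + v i + u i * v i).

(* Main.v *)
Require Import Defs.
From HB Require Import structures.
From mathcomp Require Import all_boot all_order all_algebra all_field.
Import Order.TTheory GRing.Theory Num.Theory.
Local Open Scope ring_scope.

Section Refl.
Variable A : pzRingType.
Variable a : nat -> A.
Variable anti : nat -> nat -> bool.
Definition sgn (b : bool) (x : A) := if b then - x else x.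
Hypothesis sq : forall i, (i < 4)%N -> a i * a i = -1.
Hypothesis cm : forall i j, (j < i)%N -> (i < 4)%N ->
  a i * a j = sgn (anti j i) (a j * a i).

Fixpoint evalw (w : seq nat) : A := if w is i :: w' then a i * evalw w' else 1.

Fixpoint ins (i : nat) (l : seq nat) : bool * seq nat :=
 match l with
 | [::] => (false, [:: i])
 | j :: l' => if (i < j)%N then (false, i :: l)
    else if i == j then (true, l')
    else let: (b, l'') := ins i l' in (b (+) anti j i, j :: l'')
 end.

Lemma sgnMl b x y : sgn b x * y = sgn b (x * y).
Proof. by case: b => //=; rewrite mulNr. Qed.
Lemma sgnMr b x y : x * sgn b y = sgn b (x * y).
Proof. by case: b => //=; rewrite mulrN. Qed.
Lemma sgnK b c x : sgn b (sgn c x) = sgn (c (+) b) x.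
Proof. by case: b; case: c => //=; rewrite opprK. Qed.

Definition lt4 := all (fun k => (k < 4)%N).

Lemma ins_ok i l : (i < 4)%N -> lt4 l ->
  a i * evalw l = sgn (ins i l).1 (evalw (ins i l).2) /\ lt4 (ins i l).2.
Proof.
move=> hi; elim: l => [|j l IH] /=; first by rewrite hi.
case/andP=> hj hl.
case: ltngtP => hij /=.
- by rewrite hi hj hl.
- have [e h] := IH hl; move: e h.
  case: (ins i l) => b l'' /= e h; rewrite hj h; split=> //.
  by rewrite mulrA cm // sgnMl -mulrA e sgnMr sgnK.
- by rewrite hij mulrA sq // mulN1r.
Qed.

Fixpoint normw (w : seq nat) : bool * seq nat :=
  if w is i :: w' then
    let: (b, l) := normw w' in let: (c, l') := ins i l in (b (+) c, l')
  else (false, [::]).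

Lemma normw_ok w : lt4 w -> evalw w = sgn (normw w).1 (evalw (normw w).2) /\ lt4 (normw w).2.
Proof.
elim: w => [|i w IH] //= /andP[hi hw].
have [e h] := IH hw; move: e h; case: (normw w) => b l /= e h.
have [e2 h2] := ins_ok i l hi h; move: e2 h2; case: (ins i l) => c l' /= e2 h2.
by rewrite e sgnMr e2 sgnK addbC.
Qed.

Definition term := (int * seq nat)%type.
Definition evalt (t : term) := evalw t.2 *~ t.1.
Definition evalp (p : seq term) := foldr (fun t r => evalt t + r) 0 p.

Definition normt (t : term) : term :=
  let: (b, l) := normw t.2 in ((if b then - t.1 else t.1), l).

Lemma normt_ok t : lt4 t.2 -> evalt (normt t) = evalt t /\ lt4 (normt t).2.
Proof.
case: t => c w /= hw; rewrite /normt /evalt /=.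
have [e h] := normw_ok w hw; move: e h; case: (normw w) => b l /= e h.
rewrite e; move: e => _; case: b => /=; by rewrite ?mulrNz ?mulNrz h.
Qed.

Fixpoint addterm (t : term) (p : seq term) : seq term :=
  match p with
  | [::] => [:: t]
  | s :: p' => if t.2 == s.2 then (t.1 + s.1, s.2) :: p' else s :: addterm t p'
  end.

Lemma addterm_ok t p : evalp (addterm t p) = evalt t + evalp p.
Proof.
elim: p => [|s p IH] //=.
case: eqP => e /=.
  by rewrite /evalt /= mulrzDr -e addrA.
by rewrite IH addrCA.
Qed.

Definition normp (p : seq term) := foldr (fun t acc => addterm (normt t) acc) [::] p.

Definition lt4p (p : seq term) := all (fun t => lt4 t.2) p.

Lemma normp_ok p : lt4p p -> evalp (normp p) = evalp p.
Proof.
elim: p => [|t p IH] //= /andP[ht hp].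
by rewrite addterm_ok IH // (normt_ok t ht).1.
Qed.

Lemma zero_ok p : all (fun t => t.1 == 0) p -> evalp p = 0.
Proof.
elim: p => [|t p IH] //= /andP[/eqP h hp].
by rewrite IH // /evalt h mulr0z addr0.
Qed.

Definition pmul (p q : seq term) : seq term :=
  flatten [seq [seq (t.1 * s.1, t.2 ++ s.2) | s <- q] | t <- p].

Lemma evalp_cat p q : evalp (p ++ q) = evalp p + evalp q.
Proof. by elim: p => [|t p IH] /=; rewrite ?add0r // IH addrA. Qed.

Lemma evalw_cat w w' : evalw (w ++ w') = evalw w * evalw w'.
Proof. by elim: w => [|i w IH] /=; rewrite ?mul1r // IH mulrA. Qed.

Lemma pmul_ok p q : evalp (pmul p q) = evalp p * evalp q.
Proof.
elim: p => [|t p IH] /=; first by rewrite mul0r.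
rewrite evalp_cat IH mulrDl; congr (_ + _).
clear IH; elim: q => [|s q IHq] /=; first by rewrite mulr0.
rewrite IHq mulrDr; congr (_ + _).
by rewrite /evalt /= evalw_cat mulrzAl mulrzAr -mulrzA mulrC.
Qed.

Definition psub (p q : seq term) := p ++ [seq (- t.1, t.2) | t <- q].

Lemma psub_ok p q : evalp (psub p q) = evalp p - evalp q.
Proof.
rewrite evalp_cat; congr (_ + _).
elim: q => [|t q IH] /=; first by rewrite oppr0.
by rewrite IH opprD /evalt /= mulrNz.
Qed.

Definition check (p q : seq term) :=
  lt4p (psub p q) && all (fun t => t.1 == 0) (normp (psub p q)).

Lemma check_ok p q : check p q -> evalp p = evalp q.
Proof.
case/andP=> h1 h2; apply/eqP; rewrite -subr_eq0 -psub_ok -normp_ok //.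
by rewrite zero_ok.
Qed.

End Refl.
Arguments evalw {A}.
Arguments evalt {A}.
Arguments evalp {A}.
Arguments pmul_ok {A}.
Arguments psub_ok {A}.
Arguments evalp_cat {A}.
Arguments check_ok {A} a anti.

Lemma two_neq0 : (2%:R : algC) != 0. Proof. by rewrite pnatr_eq0. Qed.

Lemma q6_key : q6 * (1 - q6) = 1.
Proof.
rewrite /q6; set r := ('i * _)%R.
have hr : r ^+ 2 = - 3%:R by rewrite /r exprMn sqrCi sqrtCK mulN1r.
have h1 : 1 - q6 = (1 - r) / 2%:R.
  apply: (mulIf two_neq0); rewrite divfK ?two_neq0 // mulrBl mul1r divfK ?two_neq0 //.
  by rewrite mulr2n opprD addrA addrK addrC.
rewrite h1 mulf_div.
have -> : (1 + r) * (1 - r) = 4%:R.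
  by rewrite mulrBr mulr1 mulrDl mul1r -expr2 hr opprD opprK addrA addrK -(natrD _ 1 3).
by rewrite -natrM mulfV // pnatr_eq0.
Qed.

Lemma q6_neq0 : q6 != 0.
Proof. by apply/eqP=> h; have := q6_key; rewrite h mul0r => /eqP; rewrite eq_sym oner_eq0. Qed.

Lemma q6_inv : q6^-1 = 1 - q6.
Proof. exact: mulr1_eq q6_key. Qed.

Definition cc : algC := - (2%:R * q6)^-1.

Lemma half2 : (2%:R : algC)^-1 + 2%:R^-1 = 1.
Proof. by rewrite {3}(splitr 1) mul1r. Qed.

Lemma cc_half : cc = - (2%:R^-1 * (1 - q6)).
Proof. by rewrite /cc invfM q6_inv. Qed.

Lemma I1 : cc * cc + cc * cc = (q6 - 1) * cc.
Proof.
rewrite -mulrDl; congr (_ * cc).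
by rewrite cc_half -opprD -mulrDl half2 mul1r opprB.
Qed.

Lemma I3 : cc * - (q6 / 2%:R) * 4%:R = 1.
Proof.
rewrite /cc mulNr mulrN opprK invfM mulrA -[2%:R^-1 * q6^-1 * q6]mulrA mulVf ?q6_neq0 // mulr1.
by rewrite (natrM _ 2 2) mulrACA mulVf ?two_neq0 // mulr1.
Qed.

Lemma I2 : cc * cc * (-4)%:~R = q6.
Proof.
rewrite -[(-4)%:~R]/(-(4%:R) : algC) cc_half mulrNN mulrN (natrM _ 2 2).
rewrite mulrACA [2%:R^-1 * _ * 2%:R]mulrAC mulVf ?two_neq0 // mul1r.
rewrite -q6_inv {2}q6_inv mulrBr mulr1 mulVf ?q6_neq0 //.
by rewrite q6_inv addrAC subrr add0r opprK.
Qed.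

Section Aux.
Variable R : unitRingType.

Lemma sq_inv {x : R} : x * x = -1 -> x \is a GRing.unit /\ x^-1 = -x.
Proof.
move=> h.
have hu : x \is a GRing.unit by apply/GRing.unitrP; exists (-x); rewrite mulNr mulrN h opprK.
split=> //.
by rewrite -[x^-1]mulr1 -[1]opprK -h mulrN mulrA mulVr // mul1r.
Qed.

Lemma gc_eq (x y : R) : x * x = -1 -> y * y = -1 -> gcomm x y = x * y * x * y.
Proof.
move=> hx hy; rewrite /gcomm (sq_inv hx).2 (sq_inv hy).2.
by rewrite !(mulrN, mulNr) opprK.
Qed.

Lemma anti_of (x y : R) : x * x = -1 -> y * y = -1 -> gcomm x y = -1 -> x * y = -(y * x).
Proof.
move=> hx hy; rewrite gc_eq // => h.
have h2 : x * y * x = y.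
  have := congr1 (fun z => z * y) h; rewrite /= -mulrA hy mulrN1 mulN1r.
  exact: oppr_inj.
have := congr1 (fun z => z * x) h2; rewrite /= -mulrA hx mulrN1 => e.
by rewrite -e opprK.
Qed.

Lemma comm_of (x y : R) : x * x = -1 -> y * y = -1 -> gcomm x y = 1 -> x * y = y * x.
Proof.
move=> hx hy; rewrite gc_eq // => h.
have h2 : - (x * y * x) = y.
  by have := congr1 (fun z => z * y) h; rewrite /= -mulrA hy mulrN1 mul1r.
have := congr1 (fun z => z * x) h2; rewrite /= mulNr -[x * y * x * x]mulrA hx mulrN1 opprK.
by [].
Qed.
End Aux.
Arguments anti_of {R x y}.
Arguments comm_of {R x y}.
Arguments gc_eq {R x y}.

Section R4.
Variable A : pzRingType.
Definition a4 (g0 g1 g2 g3 : A) (k : nat) : A :=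
  match k with 0 => g0 | 1 => g1 | 2 => g2 | _ => g3 end%N.

Definition antiB (j i : nat) : bool := [|| (j == 0%N) && (i == 1%N), (j == 0%N) && (i == 3%N), (j == 1%N) && (i == 2%N) | (j == 2%N) && (i == 3%N)].
Definition antiF (j i : nat) : bool := ((j == 0%N) && (i == 1%N)) || ((j == 2%N) && (i == 3%N)).

Lemma refl4B (g0 g1 g2 g3 : A) :
  g0 * g0 = -1 -> g1 * g1 = -1 -> g2 * g2 = -1 -> g3 * g3 = -1 ->
  g1 * g0 = -(g0 * g1) -> g2 * g0 = g0 * g2 -> g2 * g1 = -(g1 * g2) ->
  g3 * g0 = -(g0 * g3) -> g3 * g1 = g1 * g3 -> g3 * g2 = -(g2 * g3) ->
  forall p q, check antiB p q -> evalp (a4 g0 g1 g2 g3) p = evalp (a4 g0 g1 g2 g3) q.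
Proof.
move=> s0 s1 s2 s3 h10 h20 h21 h30 h31 h32 p q; apply: check_ok.
  by case=> [|[|[|[|i]]]].
by case=> [|[|[|[|i]]]] // [|[|[|j]]].
Qed.

Lemma refl4F (g0 g1 g2 g3 : A) :
  g0 * g0 = -1 -> g1 * g1 = -1 -> g2 * g2 = -1 -> g3 * g3 = -1 ->
  g1 * g0 = -(g0 * g1) -> g2 * g0 = g0 * g2 -> g2 * g1 = g1 * g2 ->
  g3 * g0 = g0 * g3 -> g3 * g1 = g1 * g3 -> g3 * g2 = -(g2 * g3) ->
  forall p q, check antiF p q -> evalp (a4 g0 g1 g2 g3) p = evalp (a4 g0 g1 g2 g3) q.
Proof.
move=> s0 s1 s2 s3 h10 h20 h21 h30 h31 h32 p q; apply: check_ok.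
  by case=> [|[|[|[|i]]]].
by case=> [|[|[|[|i]]]] // [|[|[|j]]].
Qed.

Definition X01 : seq term := [:: (1%Z,[::]); (1%Z,[::0%N]); (1%Z,[::1%N]); (1%Z,[::0%N;1%N])].
Definition X23 : seq term := [:: (1%Z,[::]); (1%Z,[::2%N]); (1%Z,[::3%N]); (1%Z,[::2%N;3%N])].
Definition Y01 : seq term := [:: (1%Z,[::]); ((-1)%Z,[::0%N]); ((-1)%Z,[::1%N]); ((-1)%Z,[::0%N;1%N])].

Lemma evX01 g0 g1 g2 g3 : evalp (a4 g0 g1 g2 g3) X01 = 1 + g0 + g1 + g0 * g1.
Proof. by rewrite /evalp /evalt /= !mulr1 !mulr1z addr0 !addrA. Qed.
Lemma evX23 g0 g1 g2 g3 : evalp (a4 g0 g1 g2 g3) X23 = 1 + g2 + g3 + g2 * g3.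
Proof. by rewrite /evalp /evalt /= !mulr1 !mulr1z addr0 !addrA. Qed.
Lemma evY01 g0 g1 g2 g3 : evalp (a4 g0 g1 g2 g3) Y01 = 1 - g0 - g1 - g0 * g1.
Proof. by rewrite /evalp /evalt /= !mulr1 !mulr1z !mulrN1z addr0 !addrA. Qed.
Lemma evM g0 g1 g2 g3 (c : int) (w : seq nat) :
  evalp (a4 g0 g1 g2 g3) [:: (c, w)] = evalw (a4 g0 g1 g2 g3) w *~ c.
Proof. by rewrite /evalp /evalt /= addr0. Qed.
End R4.
Arguments a4 {A}.
Arguments refl4B {A}.
Arguments refl4F {A}.
Arguments evX01 {A}.
Arguments evX23 {A}.
Arguments evY01 {A}.
Arguments evM {A}.
Lemma gen4 (A : zmodType) (t x w : A) : t - x + w - t + (x - w) = 0.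
Proof. by rewrite [t - x + w - t]addrAC [t - x - t]addrAC subrr add0r [- x + w]addrC addrA subrK subrr. Qed.

Theorem mainTheorem3 (n : nat) (hn : (2 <= n)%N) (A : unitAlgType algC)
    (u v : nat -> A) (hrel : Qn_rels n u v) :
  let s := s_gen u v in
  (forall i, (1 <= i)%N -> (i <= n - 2)%N ->
     s i * s i.+1 * s i = s i.+1 * s i * s i.+1) /\
  (forall i j, (1 <= i <= n.-1)%N -> (1 <= j <= n.-1)%N ->
     ((i.+2 <= j)%N || (j.+2 <= i)%N) -> s i * s j = s j * s i) /\
  (forall i, (1 <= i <= n.-1)%N -> (s i - q6%:A) * (s i + 1) = 0) /\
  (s 1%N \is a GRing.unit /\
   (s 1%N)^-1 = (- (q6 / 2%:R)) *: (1 - u 1%N - v 1%N - u 1%N * v 1%N)) /\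
  (s 1%N)^-1 * u 1%N * s 1%N = u 1%N * v 1%N /\
  (s 1%N)^-1 * v 1%N * s 1%N = u 1%N /\
  ((3 <= n)%N ->
     (s 1%N)^-1 * u 2%N * s 1%N = u 2%N * v 1%N /\
     (s 1%N)^-1 * v 2%N * s 1%N = - (u 1%N * v 1%N * v 2%N)).
Proof.
move=> s.
case: hrel => H1 [H2 [H3 H4]].
have Us k : (1 <= k <= n.-1)%N -> u k * u k = -1 by move/H1=> [h _]; rewrite -expr2.
have Vs k : (1 <= k <= n.-1)%N -> v k * v k = -1 by move/H1=> [_ h]; rewrite -expr2.
have UVn k l : (1 <= k <= n.-1)%N -> (1 <= l <= n.-1)%N -> (k <= l.+1)%N -> (l <= k.+1)%N ->
    v l * u k = - (u k * v l).
  move=> hk hl h1 h2; rewrite (anti_of (Us k hk) (Vs l hl) (H2 k l hk hl h1 h2)) opprK //.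
have UVf k l : (1 <= k <= n.-1)%N -> (1 <= l <= n.-1)%N -> ((k.+2 <= l)%N || (l.+2 <= k)%N) ->
    v l * u k = u k * v l.
  move=> hk hl h; rewrite (comm_of (Us k hk) (Vs l hl) (H3 k l hk hl h)) //.
have UU k l : (1 <= k <= n.-1)%N -> (1 <= l <= n.-1)%N -> u l * u k = u k * u l.
  by move=> hk hl; rewrite (comm_of (Us k hk) (Us l hl) (H4 k l hk hl).1).
have VV k l : (1 <= k <= n.-1)%N -> (1 <= l <= n.-1)%N -> v l * v k = v k * v l.
  by move=> hk hl; rewrite (comm_of (Vs k hk) (Vs l hl) (H4 k l hk hl).2).
have sE k : s k = cc *: (1 + u k + v k + u k * v k) by [].
have R1 k (hk : (1 <= k <= n.-1)%N) p q : check antiB p q ->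
    evalp (a4 (u k) (v k) (u k) (v k)) p = evalp (a4 (u k) (v k) (u k) (v k)) q.
  have e1 := UVn k k hk hk (leqnSn k) (leqnSn k).
  apply: refl4B => //; rewrite ?Us ?Vs // e1 opprK //.
have R2 k (hk : (1 <= k <= n.-1)%N) (hk1 : (1 <= k.+1 <= n.-1)%N) p q : check antiB p q ->
    evalp (a4 (u k) (v k) (u k.+1) (v k.+1)) p = evalp (a4 (u k) (v k) (u k.+1) (v k.+1)) q.
  have e1 := UVn k k hk hk (leqnSn k) (leqnSn k).
  have e2 := UVn k.+1 k.+1 hk1 hk1 (leqnSn _) (leqnSn _).
  have e3 := UVn k.+1 k hk1 hk (leqnn _) (leqW (leqnSn _)).
  have e4 := UVn k k.+1 hk hk1 (leqW (leqnSn _)) (leqnn _).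
  apply: refl4B => //; rewrite ?Us ?Vs ?e1 ?e2 ?e4 ?(UU k k.+1) ?(VV k k.+1) //.
  by rewrite e3 opprK.
have RF k l (hk : (1 <= k <= n.-1)%N) (hl : (1 <= l <= n.-1)%N)
    (hkl : ((k.+2 <= l)%N || (l.+2 <= k)%N)) p q : check antiF p q ->
    evalp (a4 (u k) (v k) (u l) (v l)) p = evalp (a4 (u k) (v k) (u l) (v l)) q.
  have e1 := UVn k k hk hk (leqnSn k) (leqnSn k).
  have e2 := UVn l l hl hl (leqnSn _) (leqnSn _).
  have hlk : ((l.+2 <= k)%N || (k.+2 <= l)%N) by rewrite orbC.
  have e3 := UVf l k hl hk hlk.
  have e4 := UVf k l hk hl hkl.
  apply: refl4F => //; rewrite ?Us ?Vs ?e1 ?e2 ?e4 ?(UU k l) ?(VV k l) //.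
have hn1 : (n - 2).+1 = n.-1 by clear -hn; case: n hn => [|[|m]] // _; rewrite !subSS subn0.
have h1r : (0 < 1 <= n.-1)%N by clear -hn; case: n hn => [|[|m]].
split.
  move=> i hi1 hi2.
  have hk : (0 < i <= n.-1)%N by rewrite hi1 -hn1 leqW.
  have hk1 : (0 < i.+1 <= n.-1)%N by rewrite -hn1 ltnS.
  have E : (1 + u i + v i + u i * v i) * (1 + u i.+1 + v i.+1 + u i.+1 * v i.+1) *
           (1 + u i + v i + u i * v i) =
           (1 + u i.+1 + v i.+1 + u i.+1 * v i.+1) * (1 + u i + v i + u i * v i) *
           (1 + u i.+1 + v i.+1 + u i.+1 * v i.+1).
    rewrite -(evX01 (u i) (v i) (u i.+1) (v i.+1)) -(evX23 (u i) (v i) (u i.+1) (v i.+1)).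
    rewrite -!pmul_ok; apply: R2 => //; by vm_compute.
  by rewrite !sE -!scalerAl -!scalerAr -!scalerAl !scalerA E.
split.
  move=> i j hi hj hij.
  have E : (1 + u i + v i + u i * v i) * (1 + u j + v j + u j * v j) =
           (1 + u j + v j + u j * v j) * (1 + u i + v i + u i * v i).
    rewrite -(evX01 (u i) (v i) (u j) (v j)) -(evX23 (u i) (v i) (u j) (v j)).
    rewrite -!pmul_ok; apply: RF => //; by vm_compute.
  by rewrite !sE -!scalerAl -!scalerAr -?scalerAl !scalerA E.
split.
  move=> i hi.
  pose X := (1 + u i + v i + u i * v i).
  have XX : X * X = X + (X + 1 *~ (-4)).
    have h := R1 i hi (pmul X01 X01) (X01 ++ (X01 ++ [:: ((-4)%Z, [::])])) ltac:(by vm_compute).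
    by move: h; rewrite pmul_ok !evalp_cat !evX01 evM.
  have SS : s i * s i = (q6 - 1) *: s i + q6%:A.
    rewrite sE -/X -scalerAl -scalerAr XX !scalerA scalerDr [(cc * cc) *: (X + _)]scalerDr addrA -scalerDl I1.
    by rewrite -[(-4)%:~R : A](scaler_int (-4) 1) scalerA I2.
  rewrite mulrDr mulr1 mulrBl SS -scalerAl mul1r scalerBl scale1r.
  exact: gen4.
pose X := 1 + u 1%N + v 1%N + u 1%N * v 1%N.
pose Y := 1 - u 1%N - v 1%N - u 1%N * v 1%N.
have XY : X * Y = 1 *~ 4.
  have h := R1 1%N h1r (pmul X01 Y01) [:: (4%Z, [::])] ltac:(by vm_compute).
  by move: h; rewrite pmul_ok evX01 evY01 evM.
have YX : Y * X = 1 *~ 4.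
  have h := R1 1%N h1r (pmul Y01 X01) [:: (4%Z, [::])] ltac:(by vm_compute).
  by move: h; rewrite pmul_ok evX01 evY01 evM.
have e1 : s 1%N * ((- (q6 / 2%:R)) *: Y) = 1.
  rewrite sE -/X -scalerAl -scalerAr scalerA XY -[(1 *~ 4) : A](scaler_int 4 1).
  by rewrite scalerA I3 scale1r.
have e2 : ((- (q6 / 2%:R)) *: Y) * s 1%N = 1.
  rewrite sE -/X -scalerAl -scalerAr scalerA YX -[(1 *~ 4) : A](scaler_int 4 1).
  by rewrite scalerA [- _ * cc]mulrC I3 scale1r.
have U1 : s 1%N \is a GRing.unit by apply/GRing.unitrP; exists ((- (q6 / 2%:R)) *: Y).
have Inv : (s 1%N)^-1 = (- (q6 / 2%:R)) *: Y by rewrite -[(s 1%N)^-1]mulr1 -e1 mulKr.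
have CJ z w : z * X = X * w -> (s 1%N)^-1 * z * s 1%N = w.
  by move=> h; rewrite -mulrA sE -/X -scalerAr h scalerAl -sE mulKr.
split; first by [].
split.
  apply: CJ.
  have h := R1 1%N h1r (pmul [:: (1%Z, [:: 0%N])] X01) (pmul X01 [:: (1%Z, [:: 0%N; 1%N])]) ltac:(by vm_compute).
  by move: h; rewrite !pmul_ok evX01 !evM /= !mulr1 !mulr1z.
split.
  apply: CJ.
  have h := R1 1%N h1r (pmul [:: (1%Z, [:: 1%N])] X01) (pmul X01 [:: (1%Z, [:: 0%N])]) ltac:(by vm_compute).
  by move: h; rewrite !pmul_ok evX01 !evM /= !mulr1 !mulr1z.
move=> hn3.
have h2r : (0 < 2 <= n.-1)%N by clear -hn3; case: n hn3 => [|[|m]].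
split.
  apply: CJ.
  have h := R2 1%N h1r h2r (pmul [:: (1%Z, [:: 2%N])] X01) (pmul X01 [:: (1%Z, [:: 2%N; 1%N])]) ltac:(by vm_compute).
  by move: h; rewrite !pmul_ok evX01 !evM /= !mulr1 !mulr1z.
apply: CJ.
have h := R2 1%N h1r h2r (pmul [:: (1%Z, [:: 3%N])] X01) (pmul X01 [:: ((-1)%Z, [:: 0%N; 1%N; 3%N])]) ltac:(by vm_compute).
by move: h; rewrite !pmul_ok evX01 !evM /= !mulr1 mulr1z mulrN1z mulrA.
Qed.
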